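(* Let $n\ge 3$ and $f=x^n+a_{n-1}x^{n-1}+\cdots+a_0\in\mathbb{C}[x]$ with roots $r_1,\ldots,r_n$ (with multiplicity). Define the polynomials \[f_1(x,y)=\frac{f(y)-f(x)}{y-x},\qquad f_3(x,y)=\frac{f(y)-2f\left(\frac{x+y}{2}\right)+f(x)}{\frac{(y-x)^2}{2}}.\] Let $D_2=\prod_{1\le i,j,k\le n,\ i<j,\ j\ne k,\ k\ne i}(2r_k-r_i-r_j)$. Then $\operatorname{res}(f,\operatorname{res}(f_1,f_3,y),x)=0$ if and only if $D_2=0$.
   Context: The quotients defining $f_1,f_3$ are polynomials in $x,y$. $\operatorname{res}$ denotes the Sylvester resultant with respect to the indicated variable. *)

(* Defs.v *)
From HB Require Import structures.
From mathcomp Require Import all_boot all_order all_algebra.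
Set Implicit Arguments. Unset Strict Implicit. Unset Printing Implicit Defensive.
Import Order.TTheory GRing.Theory Num.Theory.
Local Open Scope ring_scope.

(* Bivariate polynomials are {poly {poly C}}: the OUTER variable is y,
   the INNER variable (coefficients' variable) is x. *)
Section Bivariate.
Variable C : fieldType.

Definition liftC2 (f : {poly C}) : {poly {poly C}} := map_poly (fun c : C => c%:P) f.

Definition varx : {poly {poly C}} := ('X : {poly C})%:P.
Definition vary : {poly {poly C}} := 'X.

Definition f_at_y (f : {poly C}) : {poly {poly C}} := liftC2 f \Po vary.
Definition f_at_x (f : {poly C}) : {poly {poly C}} := liftC2 f \Po varx.
Definition f_at_mid (f : {poly C}) : {poly {poly C}} :=
  liftC2 f \Po ((varx + vary) * ((2%:R)^-1)%:P%:P).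

(* f_1(x,y) = (f(y) - f(x)) / (y - x)  (exact division by the monic y - x) *)
Definition f1 (f : {poly C}) : {poly {poly C}} :=
  (f_at_y f - f_at_x f) %/ (vary - varx).

Definition f3 (f : {poly C}) : {poly {poly C}} :=
  (2%:R%:P%:P * (f_at_y f - 2%:R%:P%:P * f_at_mid f + f_at_x f))
    %/ ((vary - varx) ^+ 2).

End Bivariate.

Definition D2 (C : fieldType) (n : nat) (r : 'I_n -> C) : C :=
  \prod_(i < n) \prod_(j < n) \prod_(k < n | (i < j)%N && (j != k) && (k != i))
     (2%:R * r k - r i - r j).

(* Main.v *)
Require Import Defs.
From HB Require Import structures.
From mathcomp Require Import all_boot all_order all_algebra.
From mathcomp Require Import zify ring lra.
Import Order.TTheory GRing.Theory Num.Theory.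
Local Open Scope ring_scope.

Section Aux.
Variable C : numClosedFieldType.
Implicit Types (f p q : {poly C}) (a b : C).

Local Notation phi a := (@map_poly {poly C} C (horner_eval a)).

Lemma phi_lift f a : phi a (liftC2 f) = f.
Proof.
rewrite /liftC2 -map_poly_comp map_poly_id // => x _ /=.
by rewrite horner_evalE hornerC.
Qed.

Lemma phi_fy f a : phi a (f_at_y f) = f.
Proof. by rewrite /f_at_y /vary comp_polyXr phi_lift. Qed.

Lemma phi_fx f a : phi a (f_at_x f) = (f.[a])%:P.
Proof.
by rewrite /f_at_x map_comp_poly phi_lift /varx map_polyC /= horner_evalE hornerX comp_polyCr.
Qed.

Definition mid a : {poly C} := (a%:P + 'X) * ((2%:R)^-1)%:P.

Lemma phi_fm f a : phi a (f_at_mid f) = f \Po mid a.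
Proof.
rewrite /f_at_mid map_comp_poly phi_lift; congr (_ \Po _).
by rewrite rmorphM rmorphD /= /varx /vary !map_polyC map_polyX /= !horner_evalE hornerX hornerC.
Qed.

Lemma phiC a (c : C) : phi a (c%:P%:P) = c%:P.
Proof. by rewrite map_polyC /= horner_evalE hornerC. Qed.

Lemma phiD1 a : phi a (vary C - varx C) = 'X - a%:P.
Proof. by rewrite rmorphB /= map_polyX /varx map_polyC /= horner_evalE hornerX. Qed.

Lemma size_phi a (P : {poly {poly C}}) : (size (phi a P) <= size P)%N.
Proof. by rewrite /map_poly; apply: size_poly. Qed.

Lemma div_uniq (A B rr d : {poly C}) :
  A * d + rr = B * d -> (size rr < size d)%N -> A = B.
Proof.
move=> e hs; have er : rr = (B - A) * d by rewrite mulrBl -e; ring.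
apply/eqP; rewrite eq_sym -subr_eq0; apply/negPn/negP => nz.
have dnz : d != 0 by rewrite -size_poly_gt0; case: (size d) hs.
move: hs; rewrite er size_mul //.
have := size_poly_gt0 (B - A); rewrite nz => h1 h2.
move: h1 h2; case: (size (B - A)) => // k _; by rewrite addSn /= ltnNge leq_addl.
Qed.

Lemma lc_map a (P : {poly {poly C}}) : P != 0 ->
  (size P <= size (phi a P))%N -> horner_eval a (lead_coef P) != 0.
Proof.
move=> Pnz hs; apply/negP => /eqP h0.
have : (size (phi a P) <= (size P).-1)%N.
  apply/leq_sizeP => j hj; rewrite coef_map /=.
  have [hj2|->] : ((size P) <= j)%N \/ j = (size P).-1 by lia.
    by move/leq_sizeP : hj2 => ->; rewrite // horner_evalE horner0.
  by rewrite -lead_coefE.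
move: hs; rewrite -size_poly_gt0 in Pnz; move: Pnz; case: (size P) => //= k; lia.
Qed.

Lemma res0 p q : p != 0 -> (resultant p q = 0 <-> exists x, root p x && root q x).
Proof.
move=> pnz; split.
  move/eqP; rewrite resultant_eq0 => hs.
  have [x hx] : exists x, root (gcdp p q) x.
    by apply/closed_rootP; rewrite neq_ltn hs orbT.
  exists x; move: hx; rewrite -dvdp_XsubCl dvdp_gcd => /andP [h1 h2].
  by rewrite -!dvdp_XsubCl h1 h2.
move=> [x /andP [h1 h2]]; apply/eqP; rewrite resultant_eq0.
have : ('X - x%:P) %| gcdp p q by rewrite dvdp_gcd !dvdp_XsubCl h1 h2.
move/dvdp_leq; rewrite gcdp_eq0 negb_and pnz size_XsubC; exact.
Qed.

Lemma two_nz : (2%:R : C) != 0.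
Proof. by rewrite pnatr_eq0. Qed.

Lemma mid_a a : (mid a).[a] = a.
Proof.
rewrite /mid hornerM hornerD hornerC hornerX hornerC.
by rewrite -mulr2n -mulr_natr; field.
Qed.

Lemma key3 a b q :
  let f := ('X - a%:P) * (('X - b%:P) * q) in
  exists T, T * ('X - a%:P) ^+ 2 = 2%:R * (f - 2%:R * (f \Po mid a))
          /\ T.[b] = q.[(mid a).[b]].
Proof.
move=> f.
have : root (q - (q \Po mid a)) a by apply/rootP; rewrite hornerD hornerN horner_comp mid_a subrr.
move/factor_theorem => [s hs].
exists (2%:R * ('X - b%:P) * s + (q \Po mid a)); split; last first.
  set m := mid a.
  rewrite hornerD !hornerM hornerXsubC subrr mulr0 mul0r add0r horner_comp. by rewrite /m hornerM.
have qE : q = (q \Po mid a) + s * ('X - a%:P) by rewrite -hs; ring.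
have h2m : 2%:R * mid a = a%:P + 'X.
  rewrite /mid mulrCA -polyC_natr -polyCM mulfV ?two_nz // mulr1 //.
have h4 : 4%:R * (mid a - a%:P) * (mid a - b%:P) =
          ((a%:P + 'X) - 2%:R * a%:P) * ((a%:P + 'X) - 2%:R * b%:P).
  by rewrite -h2m; ring.
have -> : 2%:R * (f - 2%:R * (f \Po mid a)) =
   2%:R * ('X - a%:P) * ('X - b%:P) * q -
   (4%:R * (mid a - a%:P) * (mid a - b%:P)) * (q \Po mid a).
  by rewrite /f !comp_polyM !comp_polyB comp_polyX !comp_polyC; ring.
rewrite h4; move: (q \Po mid a) qE => Q ->; ring.
Qed.

Lemma size_fy f : size (f_at_y f) = size f.
Proof. by rewrite /f_at_y /vary comp_polyXr /liftC2 size_map_polyC. Qed.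

Lemma size_fx f : (size (f_at_x f) <= 1)%N.
Proof. by rewrite /f_at_x /varx comp_polyCr size_polyC leq_b1. Qed.

Lemma size_Cmul (c : {poly C}) (P : {poly {poly C}}) : (size (c%:P * P)%R <= size P)%N.
Proof.
apply: leq_trans (size_polyMleq _ _) _.
rewrite size_polyC; case: (c != 0); case: (size P) => //.
Qed.

Lemma size_fm f : (size (f_at_mid f) <= maxn (size f) 1)%N.
Proof.
rewrite /f_at_mid; apply: leq_trans (size_comp_poly_leq _ _) _.
rewrite /liftC2 size_map_polyC.
have h2 : ((size ((varx C + vary C) * ((2%:R)^-1)%:P%:P)%R).-1 <= 1)%N.
  have h1 : (size (varx C + vary C)%R <= 2)%N.
    apply: leq_trans (size_polyD _ _) _.
    by rewrite geq_max /vary size_polyX leqnn andbT /varx size_polyC (leq_trans (leq_b1 _)).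
  have h3 := leq_trans (size_Cmul ((2%:R)^-1)%:P (varx C + vary C)) h1.
  rewrite mulrC; move: h3; case: (size _) => [|[|[|k]]] //.
have := leq_mul (leqnn (size f).-1) h2; rewrite muln1 => h4.
apply: (leq_ltn_trans h4); case: (size f) => [|k] //=.
Qed.

Lemma f1_spec f a h : h != 0 -> f = ('X - a%:P) * h ->
  phi a (f1 f) = h /\ (size (f1 f) <= size h)%N.
Proof.
move=> hnz Ef.
have mD : (vary C - varx C) \is monic := monicXsubC _.
have sD : size (vary C - varx C) = 2 := size_XsubC _.
set N := f_at_y f - f_at_x f.
have e := Pdiv.IdomainMonic.divp_eq mD N.
have hr : (size (N %% (vary C - varx C))%R < 2)%N.
  by have := ltn_modpN0 N (monic_neq0 mD); rewrite sD.
have fa : f.[a] = 0 by rewrite Ef hornerM hornerXsubC subrr mul0r.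
have sf : size f = (size h).+1.
  by rewrite Ef mulrC size_Mmonic // ?monicXsubC // size_XsubC addn2.
split.
  have pN : phi a N = f by rewrite /N rmorphB /= phi_fy phi_fx fa subr0.
  have e' := congr1 (phi a) e.
  rewrite pN [in RHS]rmorphD rmorphM /= phiD1 in e'.
  apply: (div_uniq _ _ (phi a (N %% (vary C - varx C))) ('X - a%:P)).
    by rewrite /f1 -/N -e' {1}Ef mulrC.
  by rewrite size_XsubC (leq_ltn_trans (size_phi _ _)).
rewrite /f1 -/N.
have [->|nz] := eqVneq (N %/ (vary C - varx C)) 0; first by rewrite size_poly0.
have : size (N %/ (vary C - varx C) * (vary C - varx C)) =
       (size (N %/ (vary C - varx C))).+1.
  by rewrite size_Mmonic // sD addn2.
have -> : N %/ (vary C - varx C) * (vary C - varx C) = N - N %% (vary C - varx C).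
  by rewrite {2}e addrK.
have H1 : (size N <= size f)%N.
  apply: leq_trans (size_polyD _ _) _; rewrite size_polyN size_fy geq_max leqnn /=.
  by rewrite (leq_trans (size_fx f)) // sf.
move=> eS; rewrite -ltnS -eS; apply: leq_trans (size_polyD _ _) _.
rewrite size_polyN geq_max -sf H1 /=.
by apply: leq_trans (_ : 1 <= _)%N; [rewrite -ltnS | rewrite sf].

Qed.

Lemma two_pow_ne d : (3 <= d)%N -> 2%:R * (1 - 2%:R * (2%:R : C)^-1 ^+ d) != 0 :> C.
Proof.
move=> hd; rewrite mulf_neq0 ?two_nz // subr_eq0; apply/negP => /eqP h.
have h1 : (2%:R : C) ^+ d * (2%:R)^-1 ^+ d = 1 by rewrite -exprMn mulfV ?two_nz // expr1n.
have h2 : (2%:R : C) ^+ d = 2%:R.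
  transitivity ((2%:R : C) ^+ d * (2%:R * 2%:R^-1 ^+ d)); first by rewrite -h mulr1.
  by rewrite mulrCA h1 mulr1.
move: h2; rewrite -natrX => /eqP; rewrite eqr_nat => /eqP h3.
have := leq_pexp2l (isT : (0 < 2)%N) hd; rewrite h3.
by [].
Qed.

Lemma f3_spec f a b q : f \is monic -> (4 <= size f)%N ->
  f = ('X - a%:P) * (('X - b%:P) * q) ->
  (phi a (f3 f)).[b] = q.[(mid a).[b]] /\ (phi a (f3 f) != 0 /\ (size (f3 f) <= size (phi a (f3 f)))%N).
Proof.
move=> mf sf4 Ef.
have [T [hT1 hT2]] := key3 a b q; rewrite -Ef in hT1.
set D := (vary C - varx C) ^+ 2.
have mD : D \is monic := monic_exp 2 (monicXsubC _).
have sD : size D = 3%N := size_exp_XsubC _ _.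
set N := 2%:R%:P%:P * (f_at_y f - 2%:R%:P%:P * f_at_mid f + f_at_x f).
have e := Pdiv.IdomainMonic.divp_eq mD N.
have hr : (size (N %% D)%R < 3)%N by rewrite -sD ltn_modpN0 ?monic_neq0.
have fa : f.[a] = 0 by rewrite Ef hornerM hornerXsubC subrr mul0r.
have pN : phi a N = 2%:R * (f - 2%:R * (f \Po mid a)).
  rewrite /N; set t2 := (2%:R%:P%:P : {poly {poly C}}).
  rewrite rmorphM rmorphD rmorphB rmorphM /= /t2 !phiC phi_fy phi_fm phi_fx fa.
  by rewrite addr0 polyC_natr.
have pD : phi a D = ('X - a%:P) ^+ 2 by rewrite rmorphXn /= phiD1.
have e' := congr1 (phi a) e; rewrite pN [in RHS]rmorphD rmorphM /= pD in e'.
have hf3 : phi a (f3 f) = T.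
  apply: (div_uniq _ _ (phi a (N %% D)) (('X - a%:P) ^+ 2)).
    by rewrite /f3 -/N -/D -e' hT1.
  by rewrite size_exp_XsubC (leq_ltn_trans (size_phi _ _)).
split; first by rewrite hf3.
rewrite hf3.
set d := (size f).-1.
have sm : size (mid a) = 2%N.
  rewrite /mid rreg_size; first by rewrite addrC size_XaddC.
  by apply: mulIf; rewrite invr_eq0 two_nz.
have lm : lead_coef (mid a) = 2%:R^-1.
  by rewrite /mid lead_coefM addrC lead_coefXaddC lead_coefC mul1r.
have sfm : size (f \Po mid a) = size f := size_comp_poly2 _ sm.
have lfm : lead_coef (f \Po mid a) = 2%:R^-1 ^+ d.
  by rewrite lead_coef_comp ?sm // (eqP mf) mul1r lm.
have cN : (2%:R * (f - 2%:R * (f \Po mid a)))`_d = 2%:R * (1 - 2%:R * 2%:R^-1 ^+ d).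
  rewrite !mulr_natl coefMn coefB coefMn.
  have -> : f`_d = 1 by rewrite /d -lead_coefE (eqP mf).
  have -> : (f \Po mid a)`_d = 2%:R^-1 ^+ d by rewrite -lfm lead_coefE sfm.
  by [].
have hd3 : (3 <= d)%N by rewrite /d; move: sf4; case: (size f).
have cnz := two_pow_ne d hd3; rewrite -cN in cnz.
have Tnz : T != 0 by apply: contraNneq cnz => T0; rewrite -hT1 T0 mul0r coef0.
split; first exact: Tnz.
have sT : (size f <= size T + 2)%N.
  have : (d < size (T * ('X - a%:P) ^+ 2)%R)%N.
    rewrite hT1 ltnNge; apply: contra cnz => /leq_sizeP h; apply/eqP; exact: h.
  rewrite size_Mmonic ?monic_exp ?monicXsubC // size_exp_XsubC /d.
  by rewrite addn3 /=; case: (size f) => // k; rewrite addn2.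
apply: (@leq_trans ((size f) - 2)%N); last by rewrite leq_subLR addnC.
rewrite /f3 -/N -/D.
have [->|nz] := eqVneq (N %/ D) 0; first by rewrite size_poly0.
have eS : size (N %/ D * D)%R = (size (N %/ D)%R + 2)%N.
  by rewrite size_Mmonic // sD addn3 addn2.
have eN : N %/ D * D = N - N %% D by rewrite {2}e addrK.
rewrite eN in eS.
have H1 : (size N <= size f)%N.
  apply: leq_trans (size_Cmul _ _) _.
  apply: leq_trans (size_polyD _ _) _; rewrite geq_max; apply/andP; split; last first.
    by apply: leq_trans (size_fx f) _; apply: leq_trans sf4.
  apply: leq_trans (size_polyD _ _) _; rewrite geq_max size_fy leqnn /= size_polyN.
  apply: leq_trans (size_Cmul _ _) _; apply: leq_trans (size_fm f) _.
  by rewrite geq_max leqnn /= (leq_trans _ sf4).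
rewrite leq_subRL; last by apply: leq_trans sf4.
rewrite addnC -eS; apply: leq_trans (size_polyD _ _) _.
rewrite size_polyN geq_max H1 /=.
by apply: leq_trans (ltnW hr) _; apply: leq_trans sf4.
Qed.

End Aux.

Lemma size_enum_I n : size (index_enum 'I_n) = n.
Proof.
by rewrite -(filter_predT (index_enum _)) deprecated_filter_index_enum -cardE card_ord.
Qed.

Lemma mid_eq0 (C : numClosedFieldType) (x y z : C) :
  ((mid C x).[y] - z == 0) = (2%:R * z - x - y == 0).
Proof.
have -> : (mid C x).[y] - z = - (2%:R * z - x - y) * 2%:R^-1.
  rewrite /mid hornerM hornerD !hornerC hornerX.
  by field.
by rewrite mulf_eq0 invr_eq0 oppr_eq0 (negbTE (two_nz C)) orbF.
Qed.

Lemma root_prodP (C : numClosedFieldType) n (P : pred 'I_n) (r : 'I_n -> C) x :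
  root (\prod_(i < n | P i) ('X - (r i)%:P)) x <-> exists2 i, P i & x = r i.
Proof.
rewrite /root horner_prod; split.
  by move/prodf_eq0 => [i Pi]; rewrite hornerXsubC subr_eq0 => /eqP ->; exists i.
move=> [i Pi ->]; apply/prodf_eq0; exists i => //.
by rewrite hornerXsubC subrr.
Qed.

Theorem proposition5 (C : numClosedFieldType) (n : nat) (hn : (3 <= n)%N)
  (f : {poly C}) (r : 'I_n -> C)
  (hf : f = \prod_(i < n) ('X - (r i)%:P)) :
  resultant f (resultant (f1 f) (f3 f)) = 0 <-> D2 r = 0.
Proof.
have mf : f \is monic by rewrite hf; exact: monic_prod_XsubC.
have fnz : f != 0 := monic_neq0 mf.
have sf : size f = n.+1 by rewrite hf size_prod_XsubC size_enum_I.
have sf4 : (4 <= size f)%N by rewrite sf.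
pose h i := \prod_(k < n | k != i) ('X - (r k)%:P).
pose q i j := \prod_(k < n | (k != i) && (k != j)) ('X - (r k)%:P).
have hE i : f = ('X - (r i)%:P) * h i by rewrite hf (bigD1 i).
have qE i j : j != i -> h i = ('X - (r j)%:P) * q i j.
  by move=> ji; rewrite /h (bigD1 j) //.
have hnz i : h i != 0 by apply: monic_neq0; exact: monic_prod_XsubC.
have ex_j i : exists j : 'I_n, j != i.
  have h0 : (0 < n)%N by apply: leq_trans hn.
  have h1 : (1 < n)%N by apply: leq_trans hn.
  case: (eqVneq (val i) 0%N) => hi.
    by exists (Ordinal h1); rewrite -val_eqE /= hi.
  by exists (Ordinal h0); rewrite -val_eqE /= eq_sym.
have Ri i : (resultant (f1 f) (f3 f)).[r i] = 0 <->
    exists j, j != i /\ exists k, [/\ k != i, k != j & 2%:R * r k - r i - r j = 0].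
  have [p1 s1] := f1_spec _ _ _ _ (hnz i) (hE i).
  have [j0 hj0] := ex_j i.
  have [_ [p3nz s3]] := f3_spec _ _ _ _ _ mf sf4 (etrans (hE i) (congr1 _ (qE i j0 hj0))).
  have f1nz : f1 f != 0 by apply: contra_neq (hnz i) => e0; rewrite -p1 e0 rmorph0.
  have f3nz : f3 f != 0 by apply: contra_neq p3nz => e0; rewrite e0 rmorph0.
  have l1 : horner_eval (r i) (lead_coef (f1 f)) != 0.
    by apply: lc_map f1nz _; rewrite p1.
  have l3 := lc_map _ _ _ f3nz s3.
  rewrite -horner_evalE (map_resultant l1 l3) p1 (res0 _ _ _ (hnz i)); split.
    move=> [y /andP [hy1 hy2]].
    have [j ji yE] := (root_prodP _ _ (fun k => k != i) r y).1 hy1.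
    rewrite yE in hy2.
    exists j; split => //.
    have [v _] := f3_spec _ _ _ _ _ mf sf4 (etrans (hE i) (congr1 _ (qE i j ji))).
    move: hy2; rewrite /root v /q horner_prod => /prodf_eq0 [k /andP [ki kj]].
    by rewrite hornerXsubC mid_eq0 => /eqP hk; exists k; split.
  move=> [j [ji [k [ki kj hk]]]]; exists (r j); apply/andP; split.
    by apply/(root_prodP _ _ (fun k => k != i) r); exists j.
  have [v _] := f3_spec _ _ _ _ _ mf sf4 (etrans (hE i) (congr1 _ (qE i j ji))).
  rewrite /root v /q horner_prod; apply/prodf_eq0; exists k; first by rewrite ki kj.
  by rewrite hornerXsubC mid_eq0 hk.
rewrite (res0 _ _ _ fnz); split.
  move=> [x /andP [hx1 hx2]].
  move: hx1; rewrite hf => /(root_prodP _ _ xpredT r x) [i _ xi].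
  move: hx2; rewrite /root xi => /eqP /(Ri i) [j [ji [k [ki kj hk]]]].
  apply/eqP; rewrite /D2.
  case: (ltngtP i j) => [ij|ji'|eij]; last by move: ji; rewrite (val_inj eij) eqxx.
    apply/prodf_eq0; exists i => //; apply/prodf_eq0; exists j => //.
    apply/prodf_eq0; exists k; first by rewrite ij eq_sym kj ki.
    by rewrite hk.
  apply/prodf_eq0; exists j => //; apply/prodf_eq0; exists i => //.
  apply/prodf_eq0; exists k; first by rewrite ji' eq_sym ki kj.
  have -> : 2%:R * r k - r j - r i = 2%:R * r k - r i - r j by ring.
  by rewrite hk.
move/eqP; rewrite /D2 => /prodf_eq0 [i _ /prodf_eq0 [j _ /prodf_eq0 [k /andP [/andP [ij jk] ki] hk]]].
exists (r i); apply/andP; split.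
  by rewrite hf; apply/(root_prodP _ _ xpredT r); exists i.
apply/eqP; apply/(Ri i); exists j; split.
  by rewrite eq_sym neq_ltn ij.
by exists k; split => //; [rewrite eq_sym | apply/eqP].
Qed.
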